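(* Let $A\in\mathbb{R}^{n\times d}$ have rows $\boldsymbol{a}_i^\top$, $\lambda>0$, let each $f_i$ be convex with conjugate $f_i^*$, and let $g$ be $\mu$-strongly convex and $L$-smooth. Let $\boldsymbol{x}^{(t)}$ with $\|\boldsymbol{x}^{(t)}\|_1\le\lambda$ and $\boldsymbol{y}^{(t)}\in\mathbb{R}^n$ be given, let $\bar{\boldsymbol{x}}^{(t)}=\arg\min_{\|\boldsymbol{x}\|_1\le\lambda}\mathcal{L}(\boldsymbol{x},\boldsymbol{y}^{(t)})$, let $s\ge\|\bar{\boldsymbol{x}}^{(t)}\|_0$ be an integer and $\eta=\frac{\mu}{2L}$, and define $\tilde{\boldsymbol{x}}\in\arg\min_{\|\boldsymbol{x}\|_1\le\lambda,\ \|\boldsymbol{x}\|_0\le s}\{\langle\frac1nA^\top\boldsymbol{y}^{(t)}+\nabla g(\boldsymbol{x}^{(t)}),\boldsymbol{x}\rangle+\frac L2\eta\|\boldsymbol{x}-\boldsymbol{x}^{(t)}\|^2\}$ and $\boldsymbol{x}^{(t+1)}=(1-\eta)\boldsymbol{x}^{(t)}+\eta\tilde{\boldsymbol{x}}$. Then $$\mathcal{L}(\boldsymbol{x}^{(t+1)},\boldsymbol{y}^{(t)})-\mathcal{L}(\bar{\boldsymbol{x}}^{(t)},\boldsymbol{y}^{(t)})\le\Big(1-\frac\eta2\Big)\Big(\mathcal{L}(\boldsymbol{x}^{(t)},\boldsymbol{y}^{(t)})-\mathcal{L}(\bar{\boldsymbol{x}}^{(t)},\boldsymbol{y}^{(t)})\Big),$$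 equivalently $(1-\frac\eta2)\big(\mathcal{L}(\boldsymbol{x}^{(t+1)},\boldsymbol{y}^{(t)})-\mathcal{L}(\boldsymbol{x}^{(t)},\boldsymbol{y}^{(t)})\big)\le-\frac\eta2\Delta_p^{(t)}$.
   Context: $\mathcal{L}(\boldsymbol{x},\boldsymbol{y})=g(\boldsymbol{x})+\frac1n\langle\boldsymbol{y},A\boldsymbol{x}\rangle-\frac1n\sum_{i=1}^nf_i^*(y_i)$. $\Delta_p^{(t)}=\mathcal{L}(\boldsymbol{x}^{(t+1)},\boldsymbol{y}^{(t)})-\mathcal{L}(\bar{\boldsymbol{x}}^{(t)},\boldsymbol{y}^{(t)})$. This is the primal step of the Primal-Dual Block Frank-Wolfe algorithm for the $\ell_1$ ball. *)

(* Defs.v *)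
From HB Require Import structures.
From mathcomp Require Import all_boot all_order all_algebra.
From mathcomp Require Import all_classical all_reals all_analysis.
Set Implicit Arguments. Unset Strict Implicit. Unset Printing Implicit Defensive.
Import Order.TTheory GRing.Theory Num.Theory.
Import numFieldNormedType.Exports.
Local Open Scope classical_set_scope.
Local Open Scope ring_scope.

Definition dotv {R : realType} {d : nat} (u v : 'rV[R]_d) : R :=
  \sum_(j < d) u 0 j * v 0 j.

Definition sqnorm2 {R : realType} {d : nat} (u : 'rV[R]_d) : R := dotv u u.
Definition norm2 {R : realType} {d : nat} (u : 'rV[R]_d) : R := Num.sqrt (sqnorm2 u).
Definition norm1 {R : realType} {d : nat} (u : 'rV[R]_d) : R :=
  \sum_(j < d) `|u 0 j|.
Definition norm0 {R : realType} {d : nat} (u : 'rV[R]_d) : nat :=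
  #|[set j : 'I_d | u 0 j != 0]|.

Definition gradient {R : realType} {d : nat} (g : 'rV[R]_d -> R) (x : 'rV[R]_d)
  : 'rV[R]_d := \row_(j < d) ('d g x (delta_mx 0 j : 'rV[R]_d)).

Definition convex_fun1 {R : realType} (f : R -> R) : Prop :=
  forall (x y t : R), 0 <= t <= 1 ->
    f (t * x + (1 - t) * y) <= t * f x + (1 - t) * f y.

Definition strongly_convex {R : realType} {d : nat} (mu : R) (g : 'rV[R]_d -> R)
  : Prop :=
  forall (x y : 'rV[R]_d) (t : R), 0 <= t <= 1 ->
    g (t *: x + (1 - t) *: y) <=
      t * g x + (1 - t) * g y - mu / 2 * t * (1 - t) * sqnorm2 (x - y).

Definition smooth {R : realType} {d : nat} (L : R) (g : 'rV[R]_d -> R) : Prop :=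
  (forall x, differentiable g x) /\
  forall x y : 'rV[R]_d, norm2 (gradient g x - gradient g y) <= L * norm2 (x - y).

Definition fconj {R : realType} (f : R -> R) (y : R) : \bar R :=
  ereal_sup [set ((x * y - f x)%:E) | x in [set: R]].

(* Lagrangian L(x,y) = g(x) + 1/n <y, A x> - 1/n sum_i f_i^*(y_i);
   A : n x d matrix, A x = x *m A^T, <y, A x> = <y *m A, x>. *)
Definition lagr {R : realType} {n d : nat} (A : 'M[R]_(n, d))
  (g : 'rV[R]_d -> R) (f : 'I_n -> R -> R) (x : 'rV[R]_d) (y : 'rV[R]_n) : R :=
  g x + n%:R^-1 * dotv y (x *m A^T) - n%:R^-1 * \sum_(i < n) fine (fconj (f i) (y 0 i)).

(* Main.v *)
Require Import Defs.
From HB Require Import structures.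
From mathcomp Require Import all_boot all_order all_algebra.
From mathcomp Require Import all_classical all_reals all_analysis.
From mathcomp Require Import ring lra.
Import Order.TTheory GRing.Theory Num.Theory.
Import numFieldNormedType.Exports.
Local Open Scope ring_scope.



Section S.
Context {R : realType} {d : nat}.
Implicit Types u v w : 'rV[R]_d.

Lemma dotvC u v : dotv u v = dotv v u.
Proof. by apply: eq_bigr => j _; rewrite mulrC. Qed.
Lemma dotvDr u v w : dotv u (v + w) = dotv u v + dotv u w.
Proof. by rewrite /dotv -big_split; apply: eq_bigr => j _; rewrite !mxE mulrDr. Qed.
Lemma dotvZr u v k : dotv u (k *: v) = k * dotv u v.
Proof. by rewrite /dotv mulr_sumr; apply: eq_bigr => j _; rewrite !mxE mulrCA. Qed.
Lemma dotvNr u v : dotv u (- v) = - dotv u v.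
Proof. by rewrite -scaleN1r dotvZr mulN1r. Qed.
Lemma dotvBr u v w : dotv u (v - w) = dotv u v - dotv u w.
Proof. by rewrite dotvDr dotvNr. Qed.
Lemma dotvDl u v w : dotv (v + w) u = dotv v u + dotv w u.
Proof. by rewrite dotvC dotvDr !(dotvC u). Qed.
Lemma dotvZl u v k : dotv (k *: v) u = k * dotv v u.
Proof. by rewrite dotvC dotvZr dotvC. Qed.
Lemma dotvBl u v w : dotv (v - w) u = dotv v u - dotv w u.
Proof. by rewrite dotvC dotvBr !(dotvC u). Qed.
Lemma sqnorm2_ge0 u : 0 <= sqnorm2 u.
Proof. by apply: sumr_ge0 => j _; rewrite -expr2 sqr_ge0. Qed.

Lemma sqnorm2_eq0 u : sqnorm2 u = 0 -> u = 0.
Proof.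
move=> /eqP; rewrite /sqnorm2 /dotv psumr_eq0 => [/allP H|j _]; last by rewrite -expr2 sqr_ge0.
apply/rowP => j; rewrite !mxE.
have := H j (mem_index_enum _); rewrite /= mulf_eq0 orbb => /eqP //.
Qed.

Lemma CS u v : dotv u v <= norm2 u * norm2 v.
Proof.
rewrite /norm2.
set a := Num.sqrt (sqnorm2 u); set b := Num.sqrt (sqnorm2 v).
have a0 : 0 <= a by apply: sqrtr_ge0.
have b0 : 0 <= b by apply: sqrtr_ge0.
have ea : a ^+ 2 = sqnorm2 u by rewrite sqr_sqrtr // sqnorm2_ge0.
have eb : b ^+ 2 = sqnorm2 v by rewrite sqr_sqrtr // sqnorm2_ge0.
have [a00|apos] := eqVneq a 0.
  have : sqnorm2 u = 0 by rewrite -ea a00 expr0n.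
  move/sqnorm2_eq0 => ->; rewrite /dotv big1 ?a00 ?mul0r // => j _; by rewrite mxE mul0r.
have [b00|bpos] := eqVneq b 0.
  have : sqnorm2 v = 0 by rewrite -eb b00 expr0n.
  move/sqnorm2_eq0 => ->; rewrite /dotv big1 ?b00 ?mulr0 // => j _; by rewrite mxE mulr0.
have H := sqnorm2_ge0 (b *: u - a *: v).
rewrite /sqnorm2 !dotvBl !dotvBr !dotvZl !dotvZr (dotvC v u) in H.
rewrite -/(sqnorm2 u) -/(sqnorm2 v) -ea -eb in H.
have ab : 0 < a * b by rewrite mulr_gt0 // lt_def ?apos ?bpos.
nra.
Qed.
End S.



Section S2.
Context {R : realType} {d : nat}.

Lemma diff_dot (g : 'rV[R]_d -> R) p v :
  'd g p v = dotv (gradient g p) v.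
Proof.
rewrite {1}(row_sum_delta v) linear_sum /dotv; apply: eq_bigr => j _.
by rewrite linearZ /= mxE mulrC.
Qed.

Lemma line_derive (g : 'rV[R]_d -> R) x v t :
  differentiable g (x + t *: v) ->
  is_derive t 1 (fun s : R => g (x + s *: v)) (dotv (gradient g (x + t *: v)) v).
Proof.
move=> dg.
have E : (fun h : R => h^-1 *: (((fun s : R => g (x + s *: v)) \o shift t) (h *: 1) - g (x + t *: v)))
  = (fun h : R => h^-1 *: ((g \o shift (x + t *: v)) (h *: v) - g (x + t *: v))).
  apply/funext => h /=; congr (_ *: (g _ - _)).
  by rewrite [_%:A]mulr1 scalerDl addrCA addrA.
apply: DeriveDef.
  by rewrite /derivable E; exact: diff_derivable.
by rewrite /derive E -/(derive g _ v) deriveE // diff_dot.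
Qed.
End S2.



Section S3.
Context {R : realType} {d : nat}.
Local Open Scope classical_set_scope.

Lemma mvt_line (g : 'rV[R]_d -> R) x v (a sg : R) :
  (forall p, differentiable g p) ->
  exists2 c : R, 0 < c < 1 &
    g (x + v) - a - sg - g x =
    dotv (gradient g (x + c *: v)) v - a - sg * (2 * c).
Proof.
move=> dg.
pose F1 := fun s : R => g (x + s *: v).
pose psi : R -> R := F1 - (a \*: (@id R)) - (sg \*: ((@id R) * (@id R))).
have D : forall s : R, is_derive s 1 psi
   (dotv (gradient g (x + s *: v)) v - a - sg * (2 * s)).
  move=> s; apply: is_derive_eq.
  apply: is_deriveB; first apply: is_deriveB.
  - exact: line_derive.
  rewrite /= ![_%:A]mulr1 -[sg *: _]/(sg * (s + s)); ring.
 have cont : {within `[0, 1], continuous psi}.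
  by apply: derivable_within_continuous => s _; have [] := D s.
have [c c01 E] := @MVT R psi (fun s => dotv (gradient g (x + s *: v)) v - a - sg * (2 * s)) 0 1 ltr01 (fun s _ => D s) cont.
exists c; first by move: c01; rewrite in_itv.
have P1 : psi 1 = g (x + 1 *: v) - a * 1 - sg * (1 * 1) by [].
have P0 : psi 0 = g (x + 0 *: v) - a * 0 - sg * (0 * 0) by [].
move: E; rewrite P1 P0 scale1r scale0r addr0 => E.
lra.
Qed.
End S3.



Section S4.
Context {R : realType} {d : nat}.
Implicit Types u v w : 'rV[R]_d.

Lemma dotvNl u v : dotv (- u) v = - dotv u v.
Proof. by rewrite dotvC dotvNr dotvC. Qed.

Lemma sqnorm2Z c v : sqnorm2 (c *: v) = c ^+ 2 * sqnorm2 v.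
Proof. by rewrite /sqnorm2 dotvZl dotvZr mulrA expr2. Qed.

Lemma sqnorm2N v : sqnorm2 (- v) = sqnorm2 v.
Proof. by rewrite -scaleN1r sqnorm2Z sqrrN expr1n mul1r. Qed.

Lemma norm2N v : norm2 (- v) = norm2 v.
Proof. by rewrite /norm2 sqnorm2N. Qed.

Lemma norm2Z c v : 0 <= c -> norm2 (c *: v) = c * norm2 v.
Proof. by move=> c0; rewrite /norm2 sqnorm2Z sqrtrM ?sqr_ge0 // sqrtr_sqr ger0_norm. Qed.

Lemma norm2_ge0 v : 0 <= norm2 v.
Proof. exact: sqrtr_ge0. Qed.

Lemma norm2_sq v : norm2 v * norm2 v = sqnorm2 v.
Proof. by rewrite -expr2 sqr_sqrtr // sqnorm2_ge0. Qed.

Lemma grad_bound (g : 'rV[R]_d -> R) L x v c : smooth L g -> 0 <= c ->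
  `| dotv (gradient g (x + c *: v) - gradient g x) v | <= L * c * sqnorm2 v.
Proof.
move=> [_ Lip] c0.
have H1 := Lip (x + c *: v) x.
have e : (x + c *: v - x : 'rV[R]_d) = c *: v by rewrite addrC addKr.
rewrite e (norm2Z _ _ c0) in H1.
have nv := norm2_ge0 v.
have L0 : 0 <= L * (c * norm2 v) by apply: le_trans H1; apply: norm2_ge0.
have H2 : norm2 (gradient g (x + c *: v) - gradient g x) * norm2 v <= L * c * sqnorm2 v.
  rewrite -norm2_sq mulrA -(mulrA L); apply: ler_wpM2r => //; by rewrite -mulrA.
rewrite ler_norml; apply/andP; split; last exact: le_trans (CS _ _) H2.
rewrite lerNl -dotvNl; apply: le_trans (CS _ _) _; by rewrite norm2N.
Qed.

Lemma aux_ub (A B C D F M c : R) : A - D - F - B = C - D - F * (2 * c) ->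
  C - D <= M -> F * (2 * c) = M -> A <= B + D + F.
Proof. lra. Qed.
Lemma aux_lb (A B C D F M c : R) : A - D - - F - B = C - D - - F * (2 * c) ->
  - (C - D) <= M -> F * (2 * c) = M -> B + D - F <= A.
Proof. lra. Qed.

Lemma smooth_ub (g : 'rV[R]_d -> R) L x v : smooth L g ->
  g (x + v) <= g x + dotv (gradient g x) v + L / 2 * sqnorm2 v.
Proof.
move=> sm; have [dg _] := sm.
have [c /andP [c0 c1] E] := mvt_line g x v (dotv (gradient g x) v) (L / 2 * sqnorm2 v) dg.
have := grad_bound g L x v c sm (ltW c0); rewrite dotvBl => /ler_normlP [_ H].
have e2 : L / 2 * sqnorm2 v * (2 * c) = L * c * sqnorm2 v by field.
exact: aux_ub E H e2.
Qed.

Lemma smooth_lb (g : 'rV[R]_d -> R) L x v : smooth L g ->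
  g x + dotv (gradient g x) v - L / 2 * sqnorm2 v <= g (x + v).
Proof.
move=> sm; have [dg _] := sm.
have [c /andP [c0 c1] E] := mvt_line g x v (dotv (gradient g x) v) (- (L / 2 * sqnorm2 v)) dg.
have := grad_bound g L x v c sm (ltW c0); rewrite dotvBl => /ler_normlP [H _].
have e2 : L / 2 * sqnorm2 v * (2 * c) = L * c * sqnorm2 v by field.
exact: aux_lb E H e2.
Qed.
End S4.



Lemma final_arith {R : realType} (L mu K gn gt gb gm cvt cvb cvtil Gt Gb Gtil su sv : R) :
  0 < L -> 0 < mu -> 0 <= su ->
  gn <= gt + mu / (2 * L) * (Gtil - Gt) + L / 2 * ((mu / (2 * L)) ^+ 2 * sv) ->
  cvtil + Gtil + L / 2 * (mu / (2 * L)) * sv <= cvb + Gb + L / 2 * (mu / (2 * L)) * su ->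
  gt + mu / (2 * (mu + L)) * (Gb - Gt) - L / 2 * ((mu / (2 * (mu + L))) ^+ 2 * su) <= gm ->
  gm <= mu / (2 * (mu + L)) * gb + (1 - mu / (2 * (mu + L))) * gt
        - mu / 2 * (mu / (2 * (mu + L))) * (1 - mu / (2 * (mu + L))) * su ->
  gb + cvb - K <= gt + cvt - K ->
  gn + ((1 - mu / (2 * L)) * cvt + mu / (2 * L) * cvtil) - K - (gb + cvb - K) <=
    (1 - mu / (2 * L) / 2) * (gt + cvt - K - (gb + cvb - K)).
Proof.
move=> L0 mu0 su0 H1 H2 H4 H5 H6.
have L0' : L != 0 by rewrite gt_eqF.
have mL0 : mu + L != 0 by rewrite gt_eqF // addr_gt0.
have t00 : 0 < mu / (2 * (mu + L)) by rewrite divr_gt0 // mulr_gt0 // addr_gt0.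
have eta0 : 0 < mu / (2 * L) by rewrite divr_gt0 // mulr_gt0.
have HA : 0 <= gb - gt - mu / 4 * su - (Gb - Gt).
  rewrite -(pmulr_rge0 _ t00).
  have -> : mu / (2 * (mu + L)) * (gb - gt - mu / 4 * su - (Gb - Gt)) =
    (gm - (gt + mu / (2 * (mu + L)) * (Gb - Gt) - L / 2 * ((mu / (2 * (mu + L))) ^+ 2 * su)))
    + ((mu / (2 * (mu + L)) * gb + (1 - mu / (2 * (mu + L))) * gt
        - mu / 2 * (mu / (2 * (mu + L))) * (1 - mu / (2 * (mu + L))) * su) - gm).
    by field.
  by rewrite addr_ge0 // subr_ge0.
rewrite -subr_ge0.
have -> : (1 - mu / (2 * L) / 2) * (gt + cvt - K - (gb + cvb - K)) -
   (gn + ((1 - mu / (2 * L)) * cvt + mu / (2 * L) * cvtil) - K - (gb + cvb - K)) =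
   (gt + mu / (2 * L) * (Gtil - Gt) + L / 2 * ((mu / (2 * L)) ^+ 2 * sv) - gn)
   + mu / (2 * L) * ((cvb + Gb + L / 2 * (mu / (2 * L)) * su) - (cvtil + Gtil + L / 2 * (mu / (2 * L)) * sv))
   + mu / (2 * L) * (gb - gt - mu / 4 * su - (Gb - Gt))
   + mu / (2 * L) / 2 * ((gt + cvt - K) - (gb + cvb - K)).
  by field.
apply: addr_ge0; [apply: addr_ge0; [apply: addr_ge0|]|].
- by rewrite subr_ge0.
- by rewrite mulr_ge0 ?subr_ge0 // ltW.
- by rewrite mulr_ge0 // ltW.
- by rewrite mulr_ge0 ?subr_ge0 // ltW // divr_gt0.
Qed.



Lemma dotv_mulT {R : realType} {n d : nat} (A : 'M[R]_(n, d)) (x : 'rV[R]_d) (y : 'rV[R]_n) :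
  dotv y (x *m A^T) = dotv (y *m A) x.
Proof.
rewrite /dotv.
under eq_bigr do rewrite mxE mulr_sumr.
rewrite exchange_big /=; apply: eq_bigr => j _.
rewrite mxE mulr_suml; apply: eq_bigr => i _.
by rewrite mxE; ring.
Qed.

Lemma lagrE {R : realType} {n d : nat} (A : 'M[R]_(n, d)) g f (x : 'rV[R]_d) (y : 'rV[R]_n) :
  lagr A g f x y = g x + dotv (n%:R^-1 *: (y *m A)) x
     - n%:R^-1 * \sum_(i < n) fine (fconj (f i) (y 0 i)).
Proof. by rewrite /lagr dotv_mulT dotvZl. Qed.

Theorem lemma1 (R : realType) (n d : nat) (A : 'M[R]_(n, d)) (lam : R)
  (f : 'I_n -> R -> R) (g : 'rV[R]_d -> R) (mu L : R)
  (xt xbar xtil : 'rV[R]_d) (yt : 'rV[R]_n) (s : nat) :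
  (0 < n)%N -> 0 < lam ->
  (forall i, convex_fun1 (f i)) ->
  (forall i, fconj (f i) (yt 0 i) \is a fin_num) ->
  0 < mu -> 0 < L -> strongly_convex mu g -> smooth L g ->
  norm1 xt <= lam ->
  norm1 xbar <= lam ->
  (forall x, norm1 x <= lam -> lagr A g f xbar yt <= lagr A g f x yt) ->
  (norm0 xbar <= s)%N ->
  let eta := mu / (2 * L) in
  let obj := fun x : 'rV[R]_d =>
    dotv (n%:R^-1 *: (yt *m A) + gradient g xt) x
    + L / 2 * eta * sqnorm2 (x - xt) in
  norm1 xtil <= lam -> (norm0 xtil <= s)%N ->
  (forall x, norm1 x <= lam -> (norm0 x <= s)%N -> obj xtil <= obj x) ->
  let xnext := (1 - eta) *: xt + eta *: xtil in
  lagr A g f xnext yt - lagr A g f xbar yt <=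
    (1 - eta / 2) * (lagr A g f xt yt - lagr A g f xbar yt).
Proof.
move=> n0 lam0 _ _ mu0 L0 sc sm Hxt Hxb Hbar Hxb0 eta obj Hxtil Hxtil0 Hopt.
rewrite [in X in is_true X]/=.
set xnext := (1 - eta) *: xt + eta *: xtil.
set c := n%:R^-1 *: (yt *m A).
set K := n%:R^-1 * \sum_(i < n) fine (fconj (f i) (yt 0 i)).
set G := gradient g xt.
set t0 := mu / (2 * (mu + L)).
have t00 : 0 < t0 by rewrite /t0 divr_gt0 // mulr_gt0 // addr_gt0.
have t01 : t0 <= 1.
  rewrite /t0 ler_pdivrMr ?mulr_gt0 ?addr_gt0 // mul1r; lra.
have H1 := smooth_ub g L xt (eta *: (xtil - xt)) sm.
rewrite dotvZr sqnorm2Z dotvBr in H1.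
have ex : xt + eta *: (xtil - xt) = xnext.
  by apply/rowP => j; rewrite /xnext !mxE; ring.
rewrite ex in H1.
have H2 := Hopt xbar Hxb Hxb0.
rewrite /obj !dotvDl in H2.
have H4 := smooth_lb g L xt (t0 *: (xbar - xt)) sm.
rewrite dotvZr sqnorm2Z dotvBr in H4.
have em : xt + t0 *: (xbar - xt) = t0 *: xbar + (1 - t0) *: xt.
  by apply/rowP => j; rewrite !mxE; ring.
rewrite em in H4.
have H5 := sc xbar xt t0.
have t0i : 0 <= t0 <= 1 by rewrite (ltW t00) t01.
have H6 := Hbar xt Hxt.
rewrite !lagrE -/c -/K in H6 *.
rewrite /xnext dotvDr !dotvZr -/xnext.
exact: (@final_arith R L mu K (g xnext) (g xt) (g xbar) (g (t0 *: xbar + (1-t0) *: xt))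
  (dotv c xt) (dotv c xbar) (dotv c xtil) (dotv G xt) (dotv G xbar) (dotv G xtil)
  (sqnorm2 (xbar - xt)) (sqnorm2 (xtil - xt)) L0 mu0 (sqnorm2_ge0 _) H1 H2 H4 (H5 t0i) H6).
Qed.
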